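(* Let $(u_n)_{n<\omega}$ be an $\omega$-sequence of words such that the product $u_0u_1\cdots u_n$ is prime for each $n<\omega$. Then the $\omega$-product $u_0u_1u_2\cdots$ is prime.
   Context: $A$ is a finite alphabet with a linear order $<_A$. Words are sequences of letters indexed by countable ordinals; $x^\alpha$ is the concatenation of $\alpha$ copies of $x$. A suffix of $x$ is $x[\gamma,|x|)$, proper if $0<\gamma<|x|$. Write $x<_{str}x'$ if there are letters $a<_Ab$ and words $y,z,z'$ with $x=yaz$, $x'=ybz'$; $x\le_{lex}x'$ iff $x$ is a prefix of $x'$ or $x<_{str}x'$. A word $x$ is primitive if $x=y^\alpha$ implies $\alpha=1$ and $y=x$. A word $w$ is prime if it is primitive and every proper suffix $z$ of $w$ satisfies $w\le_{lex}z$. *)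

(* Defs.v *)
(* transfinite words are represented
   concretely as labelled well-ordered countable types, with word equality
   being label- and order-preserving isomorphism. *)
From mathcomp Require Import all_boot all_order.
Set Implicit Arguments.
Unset Strict Implicit.
Unset Printing Implicit Defensive.
Import Order.TTheory.

Record ostruct := OS { os_car :> Type; os_lt : os_car -> os_car -> Prop }.

Definition is_countable_wo (s : ostruct) : Prop :=
  [/\ (forall x : s, ~ os_lt x x),
      (forall x y z : s, os_lt x y -> os_lt y z -> os_lt x z),
      (forall x y : s, os_lt x y \/ x = y \/ os_lt y x),
      well_founded (@os_lt s) &
      exists f : s -> nat, forall x y, f x = f y -> x = y].

(* A countable ordinal is (up to isomorphism) a countable well-order. *)
Definition is_ordinal (s : ostruct) : Prop := is_countable_wo s.

Definition is_one (s : ostruct) : Prop := exists a : s, forall b : s, b = a.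

Section Words.
Context {disp : Order.disp_t} {A : finOrderType disp}.

Record lstruct := LS { ls_ord :> ostruct; ls_lab : ls_ord -> A }.

Definition is_word (w : lstruct) : Prop := is_countable_wo w.

Definition word_eq (s t : lstruct) : Prop :=
  exists (f : s -> t) (g : t -> s),
    [/\ (forall x, g (f x) = x), (forall y, f (g y) = y),
        (forall x y, os_lt x y <-> os_lt (f x) (f y)) &
        (forall x, ls_lab (f x) = ls_lab x)].

Definition concat (x y : lstruct) : lstruct :=
  @LS (@OS (x + y)%type
        (fun p q => match p, q with
                    | inl i, inl j => os_lt i j
                    | inr i, inr j => os_lt i j
                    | inl _, inr _ => True
                    | inr _, inl _ => False end))
      (fun p => match p with inl i => ls_lab i | inr j => ls_lab j end).

Definition letter (a : A) : lstruct :=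
  @LS (@OS unit (fun _ _ => False)) (fun _ => a).

(* x ^ alpha : alpha copies of x, i.e. index set alpha x |x| ordered
   lexicographically with the alpha-coordinate major *)
Definition power (x : lstruct) (alpha : ostruct) : lstruct :=
  @LS (@OS (alpha * x)%type
        (fun p q => os_lt p.1 q.1 \/ (p.1 = q.1 /\ os_lt p.2 q.2)))
      (fun p => ls_lab p.2).

Definition suffix (x : lstruct) (gamma : x) : lstruct :=
  @LS (@OS {i : x | ~ os_lt i gamma} (fun p q => os_lt (sval p) (sval q)))
      (fun p => ls_lab (sval p)).

Definition omega_lt (u : nat -> lstruct) (p q : {k : nat & u k}) : Prop :=
  (projT1 p < projT1 q)%N \/
  exists k (i j : u k), [/\ p = existT _ k i, q = existT _ k j & os_lt i j].

Definition omega_prod (u : nat -> lstruct) : lstruct :=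
  @LS (@OS {k : nat & u k} (@omega_lt u)) (fun p => ls_lab (projT2 p)).

Definition prod_upto (u : nat -> lstruct) (n : nat) : lstruct :=
  @LS (@OS {p : {k : nat & u k} | (projT1 p <= n)%N}
           (fun p q => omega_lt (sval p) (sval q)))
      (fun p => ls_lab (projT2 (sval p))).

Definition primitive (x : lstruct) : Prop :=
  forall (y : lstruct) (alpha : ostruct),
    is_word y -> is_ordinal alpha -> word_eq x (power y alpha) ->
    is_one alpha /\ word_eq y x.

Definition is_prefix (x x' : lstruct) : Prop :=
  exists z : lstruct, is_word z /\ word_eq x' (concat x z).

Definition str_lt (x x' : lstruct) : Prop :=
  exists (a b : A) (y z z' : lstruct),
    [/\ (a < b)%O, [/\ is_word y, is_word z & is_word z'],
        word_eq x (concat y (concat (letter a) z)) &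
        word_eq x' (concat y (concat (letter b) z'))].

Definition lex_le (x x' : lstruct) : Prop := is_prefix x x' \/ str_lt x x'.

(* w prime: primitive and w <=_lex z for every proper suffix z of w
   (gamma ranges over positions of w with 0 < gamma) *)
Definition prime_word (w : lstruct) : Prop :=
  primitive w /\
  forall gamma : w, (exists delta : w, os_lt delta gamma) ->
    lex_le w (suffix gamma).

End Words.

(* Main.v *)
From Stdlib Require Import Classical ClassicalEpsilon ProofIrrelevance Eqdep_dec Wellfounded PeanoNat.
Require Import Defs.
From mathcomp Require Import all_boot all_order.
Set Implicit Arguments. Unset Strict Implicit. Unset Printing Implicit Defensive.
Import Order.TTheory.


Section S.
Context {disp : Order.disp_t} {A : finOrderType disp}.
Notation LST := (@lstruct disp A).

Definition subOS (X : ostruct) (P : X -> Prop) : ostruct :=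
  @OS {x : X | P x} (fun a b => os_lt (sval a) (sval b)).
Definition subLS (X : LST) (P : X -> Prop) : LST :=
  @LS disp A (subOS P) (fun p => ls_lab (sval p)).

Lemma sig_eqI (T : Type) (P : T -> Prop) (a b : {x : T | P x}) : sval a = sval b -> a = b.
Proof. case: a b => [x px] [y py] /= e; subst y; by rewrite (proof_irrelevance _ px py). Qed.

Lemma sub_cwo (X : ostruct) (P : X -> Prop) :
  is_countable_wo X -> is_countable_wo (subOS P).
Proof.
case=> irr tr tot wf [f finj]; split.
- move=> [x px]; exact: irr.
- move=> [x px] [y py] [z pz] /=; exact: tr.
- move=> a b; case: (tot (sval a) (sval b)) => [h|[h|h]]; [by left| right;left | by right;right].
  exact: sig_eqI.
- exact: (wf_inverse_image _ _ _ (@sval _ _) wf).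
- exists (fun a => f (sval a)) => a b /finj; exact: sig_eqI.
Qed.

Lemma sub_word (X : LST) (P : X -> Prop) : is_word X -> is_word (subLS P).
Proof. exact: sub_cwo. Qed.

Lemma word_eq_of_inv (X Y : LST) (f : X -> Y) (g : Y -> X) :
  (forall x, g (f x) = x) -> (forall y, f (g y) = y) ->
  (forall p q, os_lt p q <-> os_lt (g p) (g q)) ->
  (forall p, ls_lab (g p) = ls_lab p) -> word_eq X Y.
Proof.
move=> gf fg hg lg; exists f, g; split => //.
- move=> x y; by rewrite hg !gf.
- move=> x; by rewrite -{2}(gf x) lg.
Qed.

Lemma word_eq_sym (X Y : LST) : word_eq X Y -> word_eq Y X.
Proof.
case=> f [g [gf fg hf lf]]; apply: (word_eq_of_inv (f:=g) (g:=f)) => //.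
Qed.

Lemma word_eq_props (X Y : LST) (f : X -> Y) (g : Y -> X) :
  (forall x, g (f x) = x) -> (forall y, f (g y) = y) ->
  (forall x y, os_lt x y <-> os_lt (f x) (f y)) ->
  (forall x, ls_lab (f x) = ls_lab x) ->
  (forall p q, os_lt p q <-> os_lt (g p) (g q)) /\ (forall p, ls_lab (g p) = ls_lab p).
Proof.
move=> gf fg hf lf; split.
- move=> p q; by rewrite hf !fg.
- move=> p; by rewrite -{2}(fg p) lf.
Qed.

Record preR (X W : LST) (R : X -> W -> Prop) : Prop := PreR {
  pr_tot : forall x, exists t, R x t;
  pr_down : forall x t t', R x t -> os_lt t' t -> exists x', R x' t';
  pr_iff : forall x t x' t', R x t -> R x' t' -> (os_lt x x' <-> os_lt t t');
  pr_lab : forall x t, R x t -> ls_lab x = ls_lab t }.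
Definition pre (X W : LST) := exists R : X -> W -> Prop, preR R.

Record cstrR (X W : LST) (px : X) (pw : W) (R : X -> W -> Prop) : Prop := CstrR {
  cs_lab0 : (ls_lab px < ls_lab pw)%O;
  cs_fw : forall x, os_lt x px -> exists t, R x t;
  cs_bw : forall t, os_lt t pw -> exists x, R x t;
  cs_bd : forall x t, R x t -> os_lt x px /\ os_lt t pw;
  cs_iff : forall x t x' t', R x t -> R x' t' -> (os_lt x x' <-> os_lt t t');
  cs_lab : forall x t, R x t -> ls_lab x = ls_lab t }.
Definition cstr (X W : LST) := exists px pw (R : X -> W -> Prop), cstrR px pw R.

Lemma pre_of_prefix (X W : LST) : is_prefix X W -> pre X W.
Proof.
case=> z [_ [f [g [gf fg hf lf]]]].
exists (fun x t => f t = inl x); split.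
- move=> x; exists (g (inl x)); by rewrite fg.
- move=> x t t' e lt; move: (hf t' t); rewrite e => [[h _]]; move: (h lt).
  case: (f t') => [x'|z'] //= _; by exists x'.
- move=> x t x' t' e e'; rewrite (hf t t') e e' //.
- move=> x t e; by rewrite -lf e.
Qed.

Lemma cstr_of_str (X W : LST) : str_lt X W -> cstr X W.
Proof.
case=> a [b [y [z [z' [ab _ [f1 [g1 [gf1 fg1 hf1 lf1]]] [f2 [g2 [gf2 fg2 hf2 lf2]]]]]]]].
have [hg1 lg1] := word_eq_props gf1 fg1 hf1 lf1.
have [hg2 lg2] := word_eq_props gf2 fg2 hf2 lf2.
exists (g1 (inr (inl tt))), (g2 (inr (inl tt))).
exists (fun x t => exists yy, f1 x = inl yy /\ f2 t = inl yy); split.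
- by rewrite lg1 lg2.
- move=> x; rewrite hf1 fg1; case E: (f1 x) => [yy|[[]|r]] // _.
  exists (g2 (inl yy)), yy; by rewrite fg2.
- move=> t; rewrite hf2 fg2; case E: (f2 t) => [yy|[[]|r]] // _.
  exists (g1 (inl yy)), yy; by rewrite fg1.
- move=> x t [yy [e1 e2]]; by rewrite hf1 hf2 fg1 fg2 e1 e2.
- move=> x t x' t' [yy [e1 e2]] [yy' [e1' e2']]; by rewrite hf1 hf2 e1 e2 e1' e2'.
- move=> x t [yy [e1 e2]]; by rewrite -lf1 -lf2 e1 e2.
Qed.


Section Cwo.
Variable X : ostruct.
Hypothesis hX : is_countable_wo X.
Lemma cwo_irr (a : X) : ~ os_lt a a. Proof. by case: hX => h _ _ _ _; apply: h. Qed.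
Lemma cwo_tr (a b c : X) : os_lt a b -> os_lt b c -> os_lt a c. Proof. by case: hX => _ h _ _ _; apply: h. Qed.
Lemma cwo_tot (a b : X) : os_lt a b \/ a = b \/ os_lt b a. Proof. by case: hX => _ _ h _ _; apply: h. Qed.
Lemma cwo_wf : well_founded (@os_lt X). Proof. by case: hX. Qed.
Lemma cwo_asym (a b : X) : os_lt a b -> os_lt b a -> False.
Proof. move=> h1 h2; exact: (cwo_irr (cwo_tr h1 h2)). Qed.
Lemma cwo_eq (a b : X) : ~ os_lt a b -> ~ os_lt b a -> a = b.
Proof. move=> h1 h2; by case: (cwo_tot a b) => [|[|]]. Qed.
Lemma cwo_gt (a b : X) : ~ os_lt a b -> a <> b -> os_lt b a.
Proof. move=> h1 h2; by case: (cwo_tot a b) => [|[|]]. Qed.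
End Cwo.

Definition belowLS (X : LST) (m : X) := subLS (fun x : X => os_lt x m).
Definition aboveLS (X : LST) (m : X) := subLS (fun x : X => os_lt m x).

Lemma prefix_of_pre (X W : LST) : is_word X -> is_word W -> pre X W -> is_prefix X W.
Proof.
move=> hX hW [R [Rt Rd Ri Rl]].
have Rfun : forall x t t', R x t -> R x t' -> t = t'.
  move=> x t t' h h'; apply: (cwo_eq hW) => lt.
  - exact: (cwo_irr hX (proj2 (Ri _ _ _ _ h h') lt)).
  - exact: (cwo_irr hX (proj2 (Ri _ _ _ _ h' h) lt)).
have Rinj : forall x x' t, R x t -> R x' t -> x = x'.
  move=> x x' t h h'; apply: (cwo_eq hX) => lt.
  - exact: (cwo_irr hW (proj1 (Ri _ _ _ _ h h') lt)).
  - exact: (cwo_irr hW (proj1 (Ri _ _ _ _ h' h) lt)).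
pose P := fun t : W => exists x, R x t.
exists (subLS (fun t : W => ~ P t)); split; first exact: sub_word.
pose g := fun p : concat X (subLS (fun t : W => ~ P t)) =>
  match p with inl x => sval (constructive_indefinite_description _ (Rt x)) | inr zz => sval zz end.
pose f : W -> concat X (subLS (fun t : W => ~ P t)) := fun t : W => match excluded_middle_informative (P t) with
  | left H => @inl X (subLS (fun t : W => ~ P t)) (sval (constructive_indefinite_description _ H))
  | right H => inr (exist _ t H) end.
apply: (word_eq_of_inv (f := f) (g := g)).
- move=> t; rewrite /f; case: excluded_middle_informative => H //=.
  case: (constructive_indefinite_description _ H) => x hx /=.
  case: (constructive_indefinite_description _ (Rt x)) => t' ht' /=; exact: Rfun ht' hx.
- case=> [x|zz] /=.
  + case: (constructive_indefinite_description _ (Rt x)) => t ht /=.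
    rewrite /f; case: excluded_middle_informative => H.
    * case: (constructive_indefinite_description _ H) => x' hx' /=; congr inl; exact: Rinj hx' ht.
    * by case: H; exists x.
  + rewrite /f; case: excluded_middle_informative => H.
    * by case: (svalP zz).
    * congr inr; exact: sig_eqI.
- case=> [x|zz] [x'|zz'] /=.
  + case: (constructive_indefinite_description _ (Rt x)) => t ht /=.
    case: (constructive_indefinite_description _ (Rt x')) => t' ht' /=; exact: Ri.
  + case: (constructive_indefinite_description _ (Rt x)) => t ht /=.
    split => // _; apply: (cwo_gt hW).
    * move=> lt; apply: (svalP zz'); exact: Rd ht lt.
    * move=> e; apply: (svalP zz'); exists x; by rewrite e.
  + case: (constructive_indefinite_description _ (Rt x')) => t ht /=.
    split => // lt; apply: (svalP zz); exact: Rd ht lt.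
  + by [].
- case=> [x|zz] //=.
  case: (constructive_indefinite_description _ (Rt x)) => t ht /=; by rewrite (Rl _ _ ht).
Qed.

Lemma split_lemma (X Y : LST) (m : X) (Q : Y -> X -> Prop) :
  is_word X -> is_word Y ->
  (forall y, exists x, Q y x) -> (forall x, os_lt x m -> exists y, Q y x) ->
  (forall y x, Q y x -> os_lt x m) ->
  (forall y x y' x', Q y x -> Q y' x' -> (os_lt y y' <-> os_lt x x')) ->
  (forall y x, Q y x -> ls_lab y = ls_lab x) ->
  word_eq X (concat Y (concat (letter (ls_lab m)) (aboveLS m))).
Proof.
move=> hX hY Q1 Q2 Q3 Q4 Q5.
have Qfun : forall y x x', Q y x -> Q y x' -> x = x'.
  move=> y x x' h h'; apply: (cwo_eq hX) => lt.
  - exact: (cwo_irr hY (proj2 (Q4 _ _ _ _ h h') lt)).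
  - exact: (cwo_irr hY (proj2 (Q4 _ _ _ _ h' h) lt)).
have Qinj : forall y y' x, Q y x -> Q y' x -> y = y'.
  move=> y y' x h h'; apply: (cwo_eq hY) => lt.
  - exact: (cwo_irr hX (proj1 (Q4 _ _ _ _ h h') lt)).
  - exact: (cwo_irr hX (proj1 (Q4 _ _ _ _ h' h) lt)).
pose T := concat Y (concat (letter (ls_lab m)) (aboveLS m)).
pose g := fun p : T => match p with
  | inl y => sval (constructive_indefinite_description _ (Q1 y))
  | inr (inl _) => m
  | inr (inr a) => sval a end.
pose f : X -> T := fun x : X => match excluded_middle_informative (os_lt x m) with
  | left H => @inl Y (concat (letter (ls_lab m)) (aboveLS m)) (sval (constructive_indefinite_description _ (Q2 x H)))
  | right H => match excluded_middle_informative (x = m) with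
     | left _ => inr (inl tt)
     | right H' => inr (inr (exist _ x (cwo_gt hX H H'))) end end.
apply: (word_eq_of_inv (f := f) (g := g)).
- move=> x; rewrite /f; case: excluded_middle_informative => H /=.
  + case: (constructive_indefinite_description _ (Q2 x H)) => y hy /=.
    case: (constructive_indefinite_description _ (Q1 y)) => x' hx' /=; exact: Qfun hx' hy.
  + by case: excluded_middle_informative.
- case=> [y|[[]|a]] /=.
  + case: (constructive_indefinite_description _ (Q1 y)) => x hx /=.
    rewrite /f; case: excluded_middle_informative => H.
    * case: (constructive_indefinite_description _ (Q2 x H)) => y' hy' /=; congr inl; exact: Qinj hy' hx.
    * by case: H; exact: Q3 hx.
  + rewrite /f; case: excluded_middle_informative => H; first by case: (cwo_irr hX H).
    by case: excluded_middle_informative.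
  + rewrite /f; case: excluded_middle_informative => H; first by case: (cwo_asym hX H (svalP a)).
    case: excluded_middle_informative => H'.
    * by case: (cwo_irr hX (a := m)); move: (svalP a); rewrite H'.
    * congr inr; congr inr; exact: sig_eqI.
- case=> [y|[[]|a]] [y'|[[]|a']]; rewrite /g /=.
  + case: (constructive_indefinite_description _ (Q1 y)) => x hx /=.
    case: (constructive_indefinite_description _ (Q1 y')) => x' hx' /=.
    exact: Q4.
  + case: (constructive_indefinite_description _ (Q1 y)) => x hx /=.
    split => _; [exact: Q3 hx | exact: I].
  + case: (constructive_indefinite_description _ (Q1 y)) => x hx /=.
    split => _; [exact: (cwo_tr hX (Q3 _ _ hx) (svalP a')) | exact: I].
  + case: (constructive_indefinite_description _ (Q1 y')) => x' hx' /=.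
    split => h; [case: h | exact: (cwo_asym hX h (Q3 _ _ hx'))].
  + split => h; [case: h | exact: (cwo_irr hX h)].
  + split => _; [exact: (svalP a') | exact: I].
  + case: (constructive_indefinite_description _ (Q1 y')) => x' hx' /=.
    split => h; [case: h | exact: (cwo_asym hX (cwo_tr hX h (Q3 _ _ hx')) (svalP a))].
  + split => h; [case: h | exact: (cwo_asym hX h (svalP a))].
  + split => h; exact: h.
- case=> [y|[[]|a]] //=.
  case: (constructive_indefinite_description _ (Q1 y)) => x hx /=; by rewrite (Q5 _ _ hx).
Qed.

Lemma str_of_cstr (X W : LST) : is_word X -> is_word W -> cstr X W -> str_lt X W.
Proof.
move=> hX hW [px [pw [R [c0 cf cb cbd ci cl]]]].
exists (ls_lab px), (ls_lab pw), (belowLS px), (aboveLS px), (aboveLS pw).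
split.
- exact: c0.
- split; exact: sub_word.
- apply: (@split_lemma X (belowLS px) px (fun y x => sval y = x)).
  + exact: hX.
  + exact: sub_word.
  + move=> y; by exists (sval y).
  + move=> x H; by exists (exist _ x H).
  + move=> y x <-; exact: (svalP y).
  + move=> y x y' x' <- <-; split; exact.
  + by move=> y x <-.
- apply: (@split_lemma W (belowLS px) pw (fun y t => R (sval y) t)).
  + exact: hW.
  + exact: sub_word.
  + move=> y; exact: cf (svalP y).
  + move=> t H; case: (cb t H) => x hx; by exists (exist _ x (proj1 (cbd _ _ hx))).
  + move=> y x h; exact: (proj2 (cbd _ _ h)).
  + move=> y x y' x'; exact: ci.
  + move=> y x; exact: cl.
Qed.

End S.


Section S2.
Context {disp : Order.disp_t} {A : finOrderType disp}.
Notation LST := (@lstruct disp A).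

Lemma pre_comp (X Y Z : LST) (R1 : X -> Y -> Prop) (R2 : Y -> Z -> Prop) :
  preR R1 -> preR R2 -> preR (fun x z => exists y, R1 x y /\ R2 y z).
Proof.
case=> t1 d1 i1 l1 [t2 d2 i2 l2]; split.
- move=> x; case: (t1 x) => y hy; case: (t2 y) => z hz; by exists z, y.
- move=> x z z' [y [h1 h2]] lt; case: (d2 _ _ _ h2 lt) => y' h2'.
  have lt' : os_lt y' y by apply/(i2 _ _ _ _ h2' h2).
  case: (d1 _ _ _ h1 lt') => x' h1'; by exists x', y'.
- move=> x z x' z' [y [h1 h2]] [y' [h1' h2']]; rewrite (i1 _ _ _ _ h1 h1'); exact: i2.
- move=> x z [y [h1 h2]]; by rewrite (l1 _ _ h1) (l2 _ _ h2).
Qed.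

Lemma pre_refl (X : LST) : preR (fun x y : X => x = y).
Proof.
split.
- move=> x; by exists x.
- move=> x t t' <- _; by exists t'.
- move=> x t x' t' <- <-; split; exact.
- by move=> x t <-.
Qed.

Lemma cstr_transfer (X1 W1 X2 W2 : LST) : cstr X1 W1 -> pre X1 X2 -> pre W1 W2 -> cstr X2 W2.
Proof.
move=> [px [pw [R [c0 cf cb cbd ci cl]]]] [R1 [t1 d1 i1 l1]] [R2 [t2 d2 i2 l2]].
case: (t1 px) => px2 hpx; case: (t2 pw) => pw2 hpw.
exists px2, pw2, (fun x2 s => exists x1 t, [/\ R1 x1 x2, R x1 t & R2 t s]); split.
- by rewrite -(l1 _ _ hpx) -(l2 _ _ hpw).
- move=> x2 lt; case: (d1 _ _ _ hpx lt) => x1 h1.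
  have lt1 : os_lt x1 px by apply/(i1 _ _ _ _ h1 hpx).
  case: (cf _ lt1) => t h; case: (t2 t) => s h2; exists s, x1, t; by split.
- move=> s lt; case: (d2 _ _ _ hpw lt) => t h2.
  have lt1 : os_lt t pw by apply/(i2 _ _ _ _ h2 hpw).
  case: (cb _ lt1) => x h; case: (t1 x) => x2 h1; exists x2, x, t; by split.
- move=> x2 s [x1 [t [h1 h h2]]]; case: (cbd _ _ h) => a b; split.
  + by apply/(i1 _ _ _ _ h1 hpx).
  + by apply/(i2 _ _ _ _ h2 hpw).
- move=> x2 s x2' s' [x1 [t [h1 h h2]]] [x1' [t' [h1' h' h2']]].
  rewrite -(i1 _ _ _ _ h1 h1') -(i2 _ _ _ _ h2 h2'); exact: ci.
- move=> x2 s [x1 [t [h1 h h2]]]; by rewrite -(l1 _ _ h1) -(l2 _ _ h2) (cl _ _ h).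
Qed.

Lemma pre_self (X : LST) (R : X -> X -> Prop) : is_word X -> preR R ->
  forall x t, R x t -> ~ os_lt t x.
Proof.
move=> hX [Rt Rd Ri Rl] x; elim/(well_founded_ind (cwo_wf hX)): x => x IH t h lt.
case: (Rt t) => t2 h2.
have lt2 : os_lt t2 t by apply/(Ri _ _ _ _ h2 h).
exact: (IH t lt t2 h2 lt2).
Qed.

Lemma cstr_self (X : LST) : is_word X -> cstr X X -> False.
Proof.
move=> hX [px [pw [R [c0 cf cb cbd ci cl]]]].
have idR : forall x t, R x t -> t = x.
  move=> x; elim/(well_founded_ind (cwo_wf hX)): x => x IH t h.
  case: (cbd _ _ h) => hx ht.
  apply: (cwo_eq hX) => lt.
  - have ltp : os_lt t px := cwo_tr hX lt hx.
    case: (cf _ ltp) => t2 h2.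
    have : os_lt t2 t by apply/(ci _ _ _ _ h2 h).
    rewrite (IH t lt t2 h2); by move=> /(cwo_irr hX).
  - have ltp : os_lt x pw := cwo_tr hX lt ht.
    case: (cb _ ltp) => x' h'.
    have lt' : os_lt x' x by apply/(ci _ _ _ _ h' h).
    have e := IH x' lt' x h'; rewrite e in lt'; exact: (cwo_irr hX lt').
case: (cwo_tot hX px pw) => [lt|[e|lt]].
- case: (cb _ lt) => x h; have := cbd _ _ h; rewrite (idR _ _ h) => [[a _]]; exact: (cwo_irr hX a).
- by rewrite e ltxx in c0.
- case: (cf _ lt) => t h; have := cbd _ _ h; rewrite (idR _ _ h) => [[_ a]]; exact: (cwo_irr hX a).
Qed.

Lemma pre_unique (X W : LST) (R1 R2 : X -> W -> Prop) : is_word X -> is_word W ->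
  preR R1 -> preR R2 -> forall x t t', R1 x t -> R2 x t' -> t = t'.
Proof.
move=> hX hW [t1 d1 i1 l1] [t2 d2 i2 l2] x; elim/(well_founded_ind (cwo_wf hX)): x => x IH t t' h1 h2.
apply: (cwo_eq hW) => lt.
- case: (d2 _ _ _ h2 lt) => x' h2'.
  have lx : os_lt x' x by apply/(i2 _ _ _ _ h2' h2).
  case: (t1 x') => t'' h1'.
  have e := IH x' lx t'' t h1' h2'; subst t''.
  have := proj1 (i1 _ _ _ _ h1' h1) lx; by move=> /(cwo_irr hW).
- case: (d1 _ _ _ h1 lt) => x' h1'.
  have lx : os_lt x' x by apply/(i1 _ _ _ _ h1' h1).
  case: (t2 x') => t'' h2'.
  have e := IH x' lx t' t'' h1' h2'; subst t''.
  have := proj1 (i2 _ _ _ _ h2' h2) lx; by move=> /(cwo_irr hW).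
Qed.

Lemma least_ex (X : ostruct) (P : X -> Prop) : is_countable_wo X -> (exists x, P x) ->
  exists m, P m /\ forall x, P x -> x = m \/ os_lt m x.
Proof.
move=> hX [x px].
suff: exists m, P m /\ forall y, P y -> ~ os_lt y m.
  case=> m [pm hm]; exists m; split; first exact: pm.
  move=> y py; case: (cwo_tot hX m y) => [lt|[e|lt]]; [by right| by left | by case: (hm y py lt)].
elim/(well_founded_ind (cwo_wf hX)): x px => x IH px.
case: (classic (exists y, P y /\ os_lt y x)) => [[y [py lt]]|H].
- exact: IH lt py.
- exists x; split; first exact: px.
  move=> y py lt; apply: H; by exists y.
Qed.

End S2.


Section S3.
Context {disp : Order.disp_t} {A : finOrderType disp}.
Notation LST := (@lstruct disp A).
Variable u : nat -> LST.

Lemma existT_inj (k : nat) (i j : u k) : existT (fun k => u k) k i = existT _ k j -> i = j.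
Proof. exact: (inj_pair2_eq_dec _ Nat.eq_dec). Qed.

Lemma om_same (k : nat) (i j : u k) :
  omega_lt (existT (fun k => u k) k i) (existT _ k j) <-> os_lt i j.
Proof.
split.
- case=> [|[k' [i' [j' [e1 e2 lt]]]]]; first by rewrite /= ltnn.
  have ek : k = k' by move: (f_equal (@projT1 _ _) e1).
  subst k'; move/existT_inj: e1 => ->; by move/existT_inj: e2 => ->.
- move=> lt; right; by exists k, i, j.
Qed.

Lemma om_le (p q : {k : nat & u k}) : omega_lt p q -> (projT1 p <= projT1 q)%N.
Proof. case=> [/ltnW //|[k [i [j [-> -> _]]]]]; by []. Qed.

Lemma om_diff (p q : {k : nat & u k}) : projT1 p <> projT1 q ->
  (omega_lt p q <-> (projT1 p < projT1 q)%N).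
Proof.
move=> ne; split; last by left.
case=> [//|[k [i [j [e1 e2 _]]]]]; by case: ne; rewrite e1 e2.
Qed.

Lemma om_lt_ne (p q : {k : nat & u k}) : omega_lt p q -> projT1 p <> projT1 q ->
  (projT1 p < projT1 q)%N.
Proof. move=> h ne; exact: (proj1 (om_diff ne) h). Qed.

Hypothesis hu : forall n, is_word (u n).

Lemma omega_word : is_word (omega_prod u).
Proof.
split.
- case=> k i /= /om_same; exact: (cwo_irr (hu k)).
- case=> k i [l j] [m h] /=.
  case: (Nat.eq_dec k l) => [e|ne].
  + subst l; move/om_same => lij.
    case: (Nat.eq_dec k m) => [e|ne].
    * subst m; move/om_same => ljh; apply/om_same; exact: (cwo_tr (hu k) lij ljh).
    * move=> h2; left; exact: (om_lt_ne h2 ne).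
  + move=> h1; have klt := om_lt_ne h1 ne; move=> /om_le /= lm; left => /=; exact: (leq_trans klt lm).
- case=> k i [l j] /=.
  case: (ltngtP k l) => [klt|lkt|e].
  + by left; left.
  + by right; right; left.
  + subst l; case: (cwo_tot (hu k) i j) => [lt|[e|lt]].
    * left; exact/om_same.
    * by right; left; rewrite e.
    * right; right; exact/om_same.
- have H : forall k (i : u k), Acc (omega_lt (u:=u)) (existT _ k i).
    elim/(well_founded_ind Nat.lt_wf_0) => k IHk i.
    elim/(well_founded_ind (cwo_wf (hu k))): i => i IHi.
    constructor; case=> l j.
    case: (Nat.eq_dec l k) => [e|ne].
    * subst l; move/om_same => lt; exact: IHi.
    * move=> h1; have hlt := om_lt_ne h1 ne; apply: IHk; apply/ssrnat.ltP; exact: hlt.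
  by case=> k i; apply: H.
- have F : forall k, {f : u k -> nat | forall x y, f x = f y -> x = y}.
    move=> k; apply: constructive_indefinite_description; by case: (hu k).
  exists (fun p => pickle (projT1 p, sval (F (projT1 p)) (projT2 p))).
  case=> k i [l j] /= /(pcan_inj pickleK_inv) [e]; subst l => /(svalP (F k)) ->; by [].
Qed.

End S3.


Section S4.
Context {disp : Order.disp_t} {A : finOrderType disp}.
Notation LST := (@lstruct disp A).
Variable u : nat -> LST.
Hypothesis hu : forall n, is_word (u n).
Hypothesis hpr : forall n, prime_word (prod_upto u n).

Lemma pu_word n : is_word (prod_upto u n).
Proof. exact: (@sub_word _ _ (omega_prod u) (fun q => is_true (projT1 q <= n)%N) (omega_word hu)). Qed.

Lemma suffix_word (X : LST) (g : X) : is_word X -> is_word (Defs.suffix g).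
Proof. move=> hX; exact: (@sub_word _ _ X (fun i : X => not (os_lt i g)) hX). Qed.

Definition gam_n (gamma : omega_prod u) n (H : (projT1 gamma <= n)%N) : prod_upto u n :=
  exist (fun q => is_true (projT1 q <= n)%N) gamma H.

Lemma incl_pre n : preR (fun (q : prod_upto u n) (t : omega_prod u) => sval q = t).
Proof.
split.
- move=> q; by exists (sval q).
- move=> q t t' <- lt; exists (exist _ t' (leq_trans (om_le lt) (svalP q))); by [].
- move=> q t q' t' <- <-; split; exact.
- by move=> q t <-.
Qed.

Lemma incl_pre_nm n m : (n <= m)%N ->
  preR (fun (q : prod_upto u n) (t : prod_upto u m) => sval q = sval t).
Proof.
move=> nm; split.
- move=> q; by exists (exist _ (sval q) (leq_trans (svalP q) nm)).
- move=> q t t' e lt.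
  have lt2 : omega_lt (sval t') (sval q) by rewrite e.
  exists (exist _ (sval t') (leq_trans (om_le lt2) (svalP q))); by [].
- move=> q t q' t' e e'; rewrite /= e e'; split; exact.
- by move=> q t /= e; rewrite /= e.
Qed.

Lemma incl_suf_pre (gamma : omega_prod u) n (H : (projT1 gamma <= n)%N) :
  preR (fun (s : Defs.suffix (gam_n H)) (t : Defs.suffix gamma) =>
          sval (sval s) = sval t).
Proof.
split.
- move=> s; by exists (exist _ (sval (sval s)) (svalP s)).
- move=> s t t' e lt.
  have lt2 : omega_lt (sval t') (sval (sval s)) by rewrite e.
  have Hn : (projT1 (sval t') <= n)%N := leq_trans (om_le lt2) (svalP (sval s)).
  exists (exist _ (exist _ (sval t') Hn) (svalP t')); by [].
- move=> q t q' t' e e'; rewrite /= e e'; split; exact.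
- by move=> q t /= e; rewrite /= e.
Qed.

Lemma w_suffix (gamma : omega_prod u) : (exists delta, os_lt delta gamma) ->
  lex_le (omega_prod u) (Defs.suffix gamma).
Proof.
move=> [delta hd].
have hw := omega_word hu.
pose k := projT1 gamma.
have Hlex : forall n (H : (k <= n)%N),
    lex_le (prod_upto u n) (Defs.suffix (gam_n H)).
  move=> n H; apply: (proj2 (hpr n)).
  by exists (exist _ delta (leq_trans (om_le hd) H)).
case: (classic (exists n (H : (k <= n)%N),
    str_lt (prod_upto u n) (Defs.suffix (gam_n H)))).
- case=> n [H hs]; right.
  apply: str_of_cstr; [exact: hw | exact: suffix_word | ].
  apply: (cstr_transfer (cstr_of_str hs)).
  + exists (fun (q : prod_upto u n) (t : omega_prod u) => sval q = t); exact: incl_pre.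
  + eexists; exact: incl_suf_pre.
- move=> Hno; left.
  have HP : forall n, (k <= n)%N -> exists Rn : prod_upto u n -> Defs.suffix gamma -> Prop, preR Rn.
    move=> n H; case: (Hlex n H) => [hp|hs]; last by case: Hno; exists n, H.
    case: (pre_of_prefix hp) => R1 h1.
    eexists; exact: (pre_comp h1 (incl_suf_pre H)).
  have uniq : forall (q : omega_prod u) n m (Hn : (projT1 q <= n)%N) (Hm : (projT1 q <= m)%N)
      (Rn : prod_upto u n -> Defs.suffix gamma -> Prop) (Rm : prod_upto u m -> Defs.suffix gamma -> Prop)
      (t t' : Defs.suffix gamma),
      preR Rn -> preR Rm -> Rn (gam_n Hn) t -> Rm (gam_n Hm) t' -> t = t'.
    move=> q n m Hn Hm Rn Rm t t' P1 P2 h1 h2.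
    have sw : is_word (Defs.suffix gamma) := suffix_word gamma hw.
    case: (leqP n m) => [nm|/ltnW mn].
    + apply: (pre_unique (pu_word n) sw P1 (pre_comp (incl_pre_nm nm) P2) h1).
      by exists (exist _ q Hm).
    + symmetry; apply: (pre_unique (pu_word m) sw P2 (pre_comp (incl_pre_nm mn) P1) h2).
      by exists (exist _ q Hn).
  apply: prefix_of_pre; [exact: hw | exact: suffix_word | ].
  exists (fun q t => exists n (H : (projT1 q <= n)%N) (Rn : prod_upto u n -> Defs.suffix gamma -> Prop),
            [/\ (k <= n)%N, preR Rn & Rn (gam_n H) t]).
  split.
  + move=> q; have H1 : (projT1 q <= maxn k (projT1 q))%N by rewrite leq_maxr.
    have H2 : (k <= maxn k (projT1 q))%N by rewrite leq_maxl.
    case: (HP _ H2) => Rn hR; case: (pr_tot hR (exist _ q H1)) => t ht.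
    exists t, (maxn k (projT1 q)), H1, Rn; by split.
  + move=> q t t' [n [H [Rn [kn hR h]]]] lt.
    case: (pr_down hR h lt) => [[q' H'] h'].
    exists q', n, H', Rn; by split.
  + move=> q t q' t' [n [H [Rn [kn hR h]]]] [m [H' [Rm [km hR' h']]]].
    have kN : (k <= maxn n m)%N by rewrite (leq_trans kn) // leq_maxl.
    have HN : (projT1 q <= maxn n m)%N by rewrite (leq_trans H) // leq_maxl.
    have HN' : (projT1 q' <= maxn n m)%N by rewrite (leq_trans H') // leq_maxr.
    case: (HP _ kN) => RN hRN.
    case: (pr_tot hRN (exist _ q HN)) => t1 h1.
    case: (pr_tot hRN (exist _ q' HN')) => t2 h2.
    rewrite -(uniq _ _ _ _ _ _ _ _ _ hRN hR h1 h) -(uniq _ _ _ _ _ _ _ _ _ hRN hR' h2 h').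
    exact: (pr_iff hRN h1 h2).
  + move=> q t [n [H [Rn [kn hR h]]]]; exact: (pr_lab hR h).
Qed.

End S4.


Section S5.
Context {disp : Order.disp_t} {A : finOrderType disp}.
Notation LST := (@lstruct disp A).
Variable u : nat -> LST.
Hypothesis hu : forall n, is_word (u n).
Hypothesis hpr : forall n, prime_word (prod_upto u n).

Definition emptyOS : ostruct := @OS False (fun _ _ => False).

Lemma prime_nonempty (X : LST) : is_word X -> prime_word X -> exists x : X, True.
Proof.
move=> hX [hprim _]; apply: NNPP => H.
have hE : is_ordinal emptyOS.
  split; try by case.
  - by exists (fun x : emptyOS => match x with end); case.
have heq : word_eq X (power X emptyOS).
  apply: (word_eq_of_inv (f := fun x : X => False_rect (power X emptyOS) (H (ex_intro _ x I)))
                         (g := fun p : power X emptyOS => match p.1 with end)).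
  - move=> x; by case: (H (ex_intro _ x I)).
  - by case=> [[]].
  - by case=> [[]].
  - by case=> [[]].
by case: (hprim X emptyOS hX hE heq) => [[[]]].
Qed.


Lemma w_primitive : primitive (omega_prod u).
Proof.
move=> y alpha hy halpha [f0 [g0 [gf fg hf lf]]].
have hw := omega_word hu.
have [hg lg] := word_eq_props gf fg hf lf.
have [q0 _] : exists q : prod_upto u 0, True := prime_nonempty (pu_word hu 0) (hpr 0).
have [a0 [_ ha0]] := least_ex (P := fun _ : alpha => True) halpha (ex_intro _ (f0 (sval q0)).1 I).
have [y0 [_ hy0]] := least_ex (P := fun _ : y => True) hy (ex_intro _ (f0 (sval q0)).2 I).
have sameCopy : forall (v v' : omega_prod u) b, (f0 v).1 = b -> (f0 v').1 = b ->
    (os_lt v v' <-> os_lt (f0 v).2 (f0 v').2).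
  move=> v v' b e e'; rewrite hf /= e e'; split.
  - case=> [h|[_ h]]; [by case: (cwo_irr halpha h) | exact: h].
  - move=> h; by right.
case: (classic (is_one alpha)) => [[a ha]|hno].
- split; first by exists a.
  apply: (word_eq_of_inv (f := fun i : y => g0 (a, i)) (g := fun q : omega_prod u => (f0 q).2)).
  + move=> i; by rewrite fg.
  + move=> q; rewrite -(ha (f0 q).1) -surjective_pairing; exact: gf.
  + move=> p q; apply: sameCopy; exact: ha.
  + move=> q; by rewrite -lf.
- exfalso.
  have [a1 ne] : exists a1, a1 <> a0.
    apply: NNPP => H; apply: hno; exists a0 => b; apply: NNPP => hb; apply: H; by exists b.
  have a01 : os_lt a0 a1 by case: (ha0 a1 I) => // e; by case: ne.
  pose n := projT1 (g0 (a1, y0)).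
  have lt0 : forall i, os_lt (g0 (a0, i)) (g0 (a1, y0)).
    by move=> i; apply/hg => /=; left.
  have in0 : forall i, (projT1 (g0 (a0, i)) <= n)%N := fun i => om_le (lt0 i).
  case: (classic (exists d i j, (projT1 (g0 (d, i)) <= n)%N /\ ~ (projT1 (g0 (d, j)) <= n)%N))
    => [[d [i [j [hi hj]]]] | HB].
  +
    have ine : (projT1 (g0 (d, y0)) <= n)%N.
      case: (hy0 i I) => [e|lt]; first by rewrite -e.
      have lt' : os_lt (g0 (d, y0)) (g0 (d, i)) by apply/hg => /=; right.
      exact: (leq_trans (om_le lt') hi).
    have dne : d <> a0 by move=> e; subst d; apply: hj; exact: in0.
    have a0d : os_lt a0 d by case: (ha0 d I) => // e; by case: dne.
    have copy : forall s : omega_prod u, (projT1 s <= n)%N -> ~ os_lt s (g0 (d, y0)) -> (f0 s).1 = d.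
      move=> s hs nlt; apply: (cwo_eq halpha).
      - move=> lt; apply: nlt; apply/hf; rewrite fg /=; by left.
      - move=> lt; apply: hj.
        have h : os_lt (g0 (d, j)) (g0 (f0 s)) by apply/hg => /=; left.
        rewrite gf in h; exact: (leq_trans (om_le h) hs).
    pose ep := gam_n ine.
    pose phi := fun (s : Defs.suffix ep) (t : prod_upto u n) =>
                  sval t = g0 (a0, (f0 (sval (sval s))).2).
    have hphi : preR phi.
      split.
      - move=> s; by exists (gam_n (in0 (f0 (sval (sval s))).2)).
      - move=> s t t' e lt; rewrite /phi in e.
        have lt2 : @os_lt (omega_prod u) (sval t') (g0 (a0, (f0 (sval (sval s))).2)) by rewrite -e; exact: lt.
        have lt3 := proj1 (hf _ _) lt2; rewrite fg /= in lt3.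
        case: lt3 => [h|[e1 h]].
          by case: (ha0 (f0 (sval t')).1 I) => [e2|h2]; [rewrite e2 in h; case: (cwo_irr halpha h) | case: (cwo_asym halpha h h2)].
        have es : g0 (d, (f0 (sval (sval s))).2) = sval (sval s).
          by rewrite -(copy _ (svalP (sval s)) (svalP s)) -surjective_pairing gf.
        have lt4 : os_lt (g0 (d, (f0 (sval t')).2)) (sval (sval s)).
          by rewrite -es; apply/hg => /=; right.
        have in' : (projT1 (g0 (d, (f0 (sval t')).2)) <= n)%N := leq_trans (om_le lt4) (svalP (sval s)).
        have nlt' : ~ os_lt (g0 (d, (f0 (sval t')).2)) (g0 (d, y0)).
          move/hg => /= [h1|[_ h1]]; first exact: (cwo_irr halpha h1).
          case: (hy0 (f0 (sval t')).2 I) => [e2|h2]; first by rewrite e2 in h1; exact: (cwo_irr hy h1).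
          exact: (cwo_asym hy h1 h2).
        exists (exist (fun i => ~ os_lt i ep) (gam_n in') nlt').
        by rewrite /phi /= fg /= -e1 -surjective_pairing gf.
      - move=> s t s' t' e e'; rewrite /phi in e e'.
        change (@os_lt (omega_prod u) (sval (sval s)) (sval (sval s')) <->
                @os_lt (omega_prod u) (sval t) (sval t')).
        rewrite e e'.
        rewrite (sameCopy _ _ _ (copy _ (svalP (sval s)) (svalP s)) (copy _ (svalP (sval s')) (svalP s'))).
        have ea : forall i0, (f0 (g0 (a0, i0))).1 = a0 by move=> i0; rewrite fg.
        by rewrite (sameCopy _ _ _ (ea _) (ea _)) !fg.
      - move=> s t e; rewrite /phi in e.
        change (@ls_lab _ _ (omega_prod u) (sval (sval s)) = @ls_lab _ _ (omega_prod u) (sval t)).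
        by rewrite e lg -lf.
    have bound : forall s t, phi s t -> os_lt t ep.
      move=> s t e; rewrite /phi in e; change (@os_lt (omega_prod u) (sval t) (g0 (d, y0))); rewrite e.
      by apply/hg => /=; left.
    have hpn := pu_word hu n.
    have proper : exists delta : prod_upto u n, os_lt delta ep.
      exists (gam_n (in0 y0)); change (@os_lt (omega_prod u) (g0 (a0, y0)) (g0 (d, y0))).
      by apply/hg => /=; left.
    case: (proj2 (hpr n) ep proper) => [hp|hs].
    * case: (pre_of_prefix hp) => Rpsi hpsi.
      have hrho := pre_comp hpsi hphi.
      case: (pr_tot hpsi ep) => s hs; case: (pr_tot hphi s) => t ht.
      apply: (pre_self hpn hrho (x := ep) (t := t)); first by exists s.
      exact: bound ht.
    * have := cstr_transfer (cstr_of_str hs) (ex_intro _ _ (pre_refl _)) (ex_intro _ _ hphi).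
      exact: cstr_self hpn.
  +
    have HB' : forall d i j, (projT1 (g0 (d, i)) <= n)%N -> (projT1 (g0 (d, j)) <= n)%N.
      move=> d i j hi; apply: NNPP => hj; apply: HB; by exists d, i, j.
    pose C := subOS (fun b : alpha => exists i, (projT1 (g0 (b, i)) <= n)%N).
    have hC : is_ordinal C := sub_cwo _ halpha.
    have inC : forall (c : C) j, (projT1 (g0 (sval c, j)) <= n)%N.
      move=> [b [i hi]] j; exact: HB' hi.
    have inC2 : forall q : prod_upto u n, exists i, (projT1 (g0 ((f0 (sval q)).1, i)) <= n)%N.
      move=> q; exists (f0 (sval q)).2; rewrite -surjective_pairing gf; exact: svalP q.
    have heq : word_eq (prod_upto u n) (power y C).
      apply: (word_eq_of_inv
        (f := fun q : prod_upto u n => ((exist _ (f0 (sval q)).1 (inC2 q) : C), (f0 (sval q)).2) : power y C)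
        (g := fun pr : power y C => gam_n (inC pr.1 pr.2))).
      - move=> q; apply: sig_eqI => /=; rewrite -surjective_pairing; exact: gf.
      - case=> c j; apply: injective_projections => /=; [apply: sig_eqI => /=|]; by rewrite fg.
      - case=> c j [c' j'].
        apply: (iff_trans _ (hg (sval c, j) (sval c', j'))) => /=; split.
        + case=> [h|[e h]]; [by left | right; split; [by rewrite e | exact: h]].
        + case=> [h|[e h]]; [by left | right; split; [exact: sig_eqI | exact: h]].
      - case=> c j; exact: (lg (sval c, j)).
    case: (proj1 (hpr n) y C hy hC heq) => [[c hc] _].
    pose c0 : C := exist _ a0 (ex_intro _ y0 (in0 y0)).
    pose c1 : C := exist (fun b : alpha => exists i, (projT1 (g0 (b, i)) <= n)%N) a1 (ex_intro (fun i => (projT1 (g0 (a1, i)) <= n)%N) y0 (leqnn n : (projT1 (g0 (a1, y0)) <= n)%N)).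
    apply: ne; have := f_equal sval (etrans (hc c1) (esym (hc c0))); by [].
Qed.

Theorem mainTheorem5_aux : prime_word (omega_prod u).
Proof.
split; first exact: w_primitive.
exact: w_suffix.
Qed.

End S5.


Unset Implicit Arguments.

Theorem mainTheorem5 (disp : Order.disp_t) (A : finOrderType disp)
  (u : nat -> @lstruct disp A) :
  (forall n, is_word (u n)) ->
  (forall n, prime_word (prod_upto u n)) ->
  prime_word (omega_prod u).
Proof.
move=> hu hpr; exact: (mainTheorem5_aux hu hpr).
Qed.
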